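(* For all $n\ge2$, $\mathfrak a_2^\pi(n)=\{g\in\mathfrak{so}(2^n): gZ^{\otimes n}=Z^{\otimes n}g\}$.
   Context: Pauli matrices $I,X,Y,Z$; $A_iB_j$ ($i\ne j$) denotes the length-$n$ Pauli string with $A$ at position $i$, $B$ at position $j$, $I$ elsewhere. $\mathfrak{so}(N)$ is the Lie algebra of real skew-symmetric $N\times N$ matrices. For a set $S$ of Pauli strings, $\mathrm{Lie}\langle S\rangle$ is the smallest real Lie subalgebra of $\mathfrak u(2^n)$ containing $\{iP:P\in S\}$. $\mathfrak a_2^\pi(n)=\mathrm{Lie}\langle X_iY_j,\,Y_iX_j:1\le i\ne j\le n\rangle$. *)

(* Defs.v *)
From HB Require Import structures.
From mathcomp Require Import all_boot all_order all_algebra all_field.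
Set Implicit Arguments. Unset Strict Implicit. Unset Printing Implicit Defensive.
Import Order.TTheory GRing.Theory Num.Theory.
Local Open Scope ring_scope.

(* Complex numbers: algC (algebraic complex numbers, closed under all
   operations needed here).  Qubit k of a basis index a : 'I_(2^n) is
   the k-th binary digit of a. *)

Inductive pauli := PI | PX | PY | PZ.

Definition bit (k a : nat) : bool := odd (a %/ 2 ^ k).

(* single-qubit Pauli matrices, entry (row a, column b), false = |0>, true = |1> *)
Definition pauli_entry (p : pauli) (a b : bool) : algC :=
  match p with
  | PI => if a == b then 1 else 0
  | PX => if a != b then 1 else 0
  | PY => if a == b then 0 else if b then - 'i else 'i
  | PZ => if a == b then (if a then -1 else 1) else 0
  end.

Definition pauli_string (n : nat) (s : 'I_n -> pauli) : 'M[algC]_(2 ^ n) :=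
  \matrix_(a < 2 ^ n, b < 2 ^ n) \prod_(k < n) pauli_entry (s k) (bit k a) (bit k b).

Definition two_site (n : nat) (A B : pauli) (i j : 'I_n) : 'M[algC]_(2 ^ n) :=
  pauli_string (fun k => if k == i then A else if k == j then B else PI).

Definition Zall (n : nat) : 'M[algC]_(2 ^ n) := pauli_string (fun _ => PZ).

Inductive lie_closure (N : nat) (S : 'M[algC]_N -> Prop) : 'M[algC]_N -> Prop :=
  | lie_base g : S g -> lie_closure S g
  | lie_zero : lie_closure S 0
  | lie_add g h : lie_closure S g -> lie_closure S h -> lie_closure S (g + h)
  | lie_scale (r : algC) g : r \is Num.real -> lie_closure S g -> lie_closure S (r *: g)
  | lie_bracket g h : lie_closure S g -> lie_closure S h ->
      lie_closure S (g *m h - h *m g).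

Definition a2pi_gens (n : nat) (g : 'M[algC]_(2 ^ n)) : Prop :=
  exists i j : 'I_n, i != j /\
    (g = 'i *: two_site PX PY i j \/ g = 'i *: two_site PY PX i j).

Definition a2pi (n : nat) : 'M[algC]_(2 ^ n) -> Prop := lie_closure (@a2pi_gens n).

Definition in_so (N : nat) (g : 'M[algC]_N) : Prop :=
  (forall a b, g a b \is Num.real) /\ g^T = - g.

(* Main.v *)
Require Import Defs.
From mathcomp Require Import all_boot all_order all_algebra all_field.
From Stdlib Require PeanoNat Lia.
Import Lia.
From mathcomp Require Import ring lra.
Set Implicit Arguments. Unset Strict Implicit.
Import GRing.Theory Num.Theory.
Local Open Scope ring_scope.

Lemma expn_pow (a b : nat) : expn a b = Nat.pow a b.
Proof. elim: b => [|b IH] //. by rewrite expnS IH /= multE mulnC. Qed.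

Lemma odd_Nodd (x : nat) : odd x = Nat.odd x.
Proof.
elim: x => [|x IH] //. by rewrite /= PeanoNat.Nat.odd_succ -PeanoNat.Nat.negb_odd IH.
Qed.

Lemma bitE (k a : nat) : bit k a = Nat.testbit a k.
Proof.
rewrite /bit.
have -> : (a %/ 2 ^ k)%N = Nat.div a (Nat.pow 2 k).
  apply: (PeanoNat.Nat.div_unique _ _ _ (a %% 2 ^ k)%N).
  - rewrite -expn_pow. apply/ltP. by rewrite ltn_pmod // expn_gt0.
  - by rewrite -expn_pow {1}(divn_eq a (2 ^ k)) mulnC.
rewrite odd_Nodd.
have := PeanoNat.Nat.div_pow2_bits a k 0. rewrite /= => <-.
by [].
Qed.

Lemma testbit_high (a n m : nat) : (a < 2 ^ n)%N -> (n <= m)%N -> Nat.testbit a m = false.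
Proof.
move=> ha hm.
case: (PeanoNat.Nat.eq_dec a 0) => [->|a0]; first by rewrite PeanoNat.Nat.bits_0.
apply: PeanoNat.Nat.bits_above_log2.
have ha' : (a < Nat.pow 2 m)%coq_nat.
  rewrite -expn_pow. apply/ltP. apply: (leq_trans ha). by rewrite leq_exp2l.
apply/PeanoNat.Nat.log2_lt_pow2 => //. lia.
Qed.

Lemma lt_of_bits (a n : nat) : (forall m, (n <= m)%N -> Nat.testbit a m = false) -> (a < 2 ^ n)%N.
Proof.
move=> H.
have -> : a = Nat.modulo a (Nat.pow 2 n).
  apply: PeanoNat.Nat.bits_inj => m.
  case: (leqP n m) => hm.
    rewrite H // PeanoNat.Nat.mod_pow2_bits_high //. by apply/leP.
  rewrite PeanoNat.Nat.mod_pow2_bits_low //. by apply/ltP.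
rewrite expn_pow. apply/ltP. apply: PeanoNat.Nat.mod_upper_bound.
have : (0 < 2 ^ n)%N by rewrite expn_gt0. rewrite expn_pow => /ltP. lia.
Qed.

Lemma xo_lt (n : nat) (a b : 'I_(2 ^ n)) : (Nat.lxor a b < 2 ^ n)%N.
Proof.
apply: lt_of_bits => m hm. rewrite PeanoNat.Nat.lxor_spec.
by rewrite !(@testbit_high _ n m) // ltn_ord.
Qed.

Definition xo {n : nat} (a b : 'I_(2 ^ n)) : 'I_(2 ^ n) := Ordinal (@xo_lt n a b).

Lemma e_lt (n : nat) (i : 'I_n) : (2 ^ i < 2 ^ n)%N.
Proof. by rewrite ltn_exp2l. Qed.

Definition e {n : nat} (i : 'I_n) : 'I_(2 ^ n) := Ordinal (@e_lt n i).

Definition z0 {n : nat} : 'I_(2 ^ n) := Ordinal (expn_gt0 2 n).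

Lemma bit_xo n (a b : 'I_(2 ^ n)) k : bit k (xo a b) = xorb (bit k a) (bit k b).
Proof. by rewrite !bitE /= PeanoNat.Nat.lxor_spec. Qed.

Lemma bit_e n (i : 'I_n) (k : 'I_n) : bit k (e i) = (k == i).
Proof.
rewrite bitE /= expn_pow PeanoNat.Nat.pow2_bits_eqb.
case: (PeanoNat.Nat.eqb_spec i k) => [/val_inj ->|h]; first by rewrite eqxx.
by case: eqP => // hk; case: h; rewrite hk.
Qed.

Lemma bit_z0 n k : bit k (@z0 n) = false.
Proof. by rewrite bitE /= PeanoNat.Nat.bits_0. Qed.

Lemma ord_bits n (a b : 'I_(2 ^ n)) : (forall k : 'I_n, bit k a = bit k b) -> a = b.
Proof.
move=> H. apply: val_inj. apply: PeanoNat.Nat.bits_inj => m.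
case: (ltnP m n) => hm.
  by have := H (Ordinal hm); rewrite !bitE.
by rewrite !(@testbit_high _ n m) // ltn_ord.
Qed.

Lemma xoA n (a b c : 'I_(2 ^ n)) : xo a (xo b c) = xo (xo a b) c.
Proof. apply: ord_bits => k. by rewrite !bit_xo; case: bit; case: bit; case: bit. Qed.
Lemma xoC n (a b : 'I_(2 ^ n)) : xo a b = xo b a.
Proof. apply: ord_bits => k. by rewrite !bit_xo; case: bit; case: bit. Qed.
Lemma xo0 n (a : 'I_(2 ^ n)) : xo a z0 = a.
Proof. apply: ord_bits => k. by rewrite !bit_xo bit_z0; case: bit. Qed.
Lemma x0o n (a : 'I_(2 ^ n)) : xo z0 a = a.
Proof. by rewrite xoC xo0. Qed.
Lemma xoK n (a b : 'I_(2 ^ n)) : xo (xo a b) b = a.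
Proof. apply: ord_bits => k. by rewrite !bit_xo; case: bit; case: bit. Qed.
Lemma xoss n (a : 'I_(2 ^ n)) : xo a a = z0.
Proof. apply: ord_bits => k. by rewrite !bit_xo bit_z0; case: bit. Qed.

Definition sg (b : bool) : algC := if b then 1 else -1.

Definition W {n : nat} (m : 'I_(2 ^ n)) (f : 'I_(2 ^ n) -> algC) : 'M[algC]_(2 ^ n) :=
  \matrix_(x, y) if x == xo y m then f y else 0.

Lemma eqW n (m : 'I_(2 ^ n)) f g : f =1 g -> W m f = W m g.
Proof. move=> H; apply/matrixP => x y; by rewrite !mxE H. Qed.

Lemma addW n (m : 'I_(2 ^ n)) f g : W m f + W m g = W m (fun y => f y + g y).
Proof. apply/matrixP => x y; rewrite !mxE; by case: eqP; rewrite ?addr0. Qed.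

Lemma scaleW n (m : 'I_(2 ^ n)) r f : r *: W m f = W m (fun y => r * f y).
Proof. apply/matrixP => x y; rewrite !mxE; by case: eqP; rewrite ?mulr0. Qed.

Lemma oppW n (m : 'I_(2 ^ n)) f : - W m f = W m (fun y => - f y).
Proof. apply/matrixP => x y; rewrite !mxE; by case: eqP; rewrite ?oppr0. Qed.

Lemma mulW n (m1 m2 : 'I_(2 ^ n)) f1 f2 :
  W m1 f1 *m W m2 f2 = W (xo m1 m2) (fun y => f1 (xo y m2) * f2 y).
Proof.
apply/matrixP => x z; rewrite !mxE (bigD1 (xo z m2)) //= big1 ?addr0.
  rewrite !mxE eqxx -xoA (xoC m2 m1).
  by case: eqP; rewrite ?mul0r.
move=> y hy; rewrite !mxE; by rewrite (negPf hy) mulr0.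
Qed.

Lemma trW n (m : 'I_(2 ^ n)) f : (W m f)^T = W m (fun y => f (xo y m)).
Proof.
apply/matrixP => x y; rewrite !mxE.
case: (eqVneq y (xo x m)) => [->|h]; first by rewrite xoK eqxx.
case: eqP => // hx; case/eqP: h; by rewrite hx xoK.
Qed.

Definition flipp (p : pauli) : bool := match p with PX | PY => true | _ => false end.
Definition ph (p : pauli) (b : bool) : algC :=
  match p with PI | PX => 1 | PY => if b then - 'i else 'i | PZ => if b then -1 else 1 end.

Lemma pe_E p a b : pauli_entry p a b = (if a == xorb b (flipp p) then ph p b else 0).
Proof. by case: p; case: a; case: b. Qed.

Lemma ps_E n (s : 'I_n -> pauli) x y : pauli_string s x y =
  if [forall k : 'I_n, bit k x == xorb (bit k y) (flipp (s k))]
  then \prod_k ph (s k) (bit k y) else 0.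
Proof.
rewrite mxE (eq_bigr _ (fun k _ => pe_E _ _ _)).
case: (boolP [forall k, _]) => H.
  apply: eq_bigr => k _. by rewrite (forallP H k).
move: H; rewrite negb_forall => /existsP [k hk].
by rewrite (bigD1 k) //= (negPf hk) mul0r.
Qed.

Lemma eq_bits n (x y : 'I_(2 ^ n)) : (x == y) = [forall k : 'I_n, bit k x == bit k y].
Proof.
apply/eqP/forallP => [-> k //|H]. apply: ord_bits => k. exact/eqP/H.
Qed.

Definition par {n : nat} (y : 'I_(2 ^ n)) : algC := \prod_(k < n) ph PZ (bit k y).

Lemma Zall_W n : Zall n = W z0 par.
Proof.
apply/matrixP => x y. rewrite ps_E !mxE xo0 eq_bits.
congr (if _ then _ else _); apply: eq_forallb => k; by rewrite /= Bool.xorb_false_r.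
Qed.

Lemma ts_E n (A B : pauli) (i j : 'I_n) x y : i != j -> flipp A -> flipp B ->
  two_site A B i j x y =
  if x == xo y (xo (e i) (e j)) then ph A (bit i y) * ph B (bit j y) else 0.
Proof.
move=> hij hA hB. rewrite /two_site ps_E eq_bits.
have -> : [forall k : 'I_n, bit k x == xorb (bit k y)
              (flipp (if k == i then A else if k == j then B else PI))] =
          [forall k : 'I_n, bit k x == bit k (xo y (xo (e i) (e j)))].
  apply: eq_forallb => k. rewrite !bit_xo !bit_e.
  case: (eqVneq k i) => [->|hki]; first by rewrite hA (negPf hij).
  by case: (eqVneq k j) => [->|hkj] //=; rewrite ?hB ?Bool.xorb_false_r.
case: ifP => // _.
rewrite (bigD1 i) //= (bigD1 j) //=.
have -> : (i == i) = true by apply/eqP.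
have -> : (j == j) = true by apply/eqP.
have -> : (j == i) = false by rewrite eq_sym (negPf hij).
rewrite big1 ?mulr1 //.
  move=> k /andP [hki hkj]. by rewrite (negPf hki) (negPf hkj).
by apply: contra hij => /eqP ->.
Qed.

Definition G {n : nat} (i j : 'I_n) : 'M[algC]_(2 ^ n) :=
  W (xo (e i) (e j)) (fun y => sg (bit j y)).

Lemma iiE : 'i * 'i = -1 :> algC.
Proof. by rewrite -expr2 sqrCi. Qed.

Lemma ts_XY n (i j : 'I_n) : i != j -> 'i *: two_site PX PY i j = G i j.
Proof.
move=> hij; apply/matrixP => x y. rewrite mxE ts_E // !mxE.
case: ifP => _; last by rewrite mulr0.
rewrite /= mul1r. case: bit => /=; by rewrite ?mulrN iiE ?opprK.
Qed.

Lemma ts_YX n (i j : 'I_n) : i != j -> 'i *: two_site PY PX i j = G j i.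
Proof.
move=> hij; apply/matrixP => x y. rewrite mxE ts_E // !mxE (xoC (e i)).
case: ifP => _; last by rewrite mulr0.
rewrite /= mulr1. case: bit => /=; by rewrite ?mulrN iiE ?opprK.
Qed.

Lemma bit_flip n (y : 'I_(2 ^ n)) (l k : 'I_n) : bit k (xo y (e l)) = xorb (bit k y) (k == l).
Proof. by rewrite bit_xo bit_e. Qed.

Lemma par_flip n (y : 'I_(2 ^ n)) (l : 'I_n) : par (xo y (e l)) = - par y.
Proof.
rewrite /par (bigD1 l) //= [in RHS](bigD1 l) //= bit_flip eqxx.
rewrite (eq_bigr (fun k : 'I_n => ph PZ (bit k y))); last first.
  move=> k hk; by rewrite bit_flip (negPf hk) Bool.xorb_false_r.
by case: bit => /=; rewrite ?mulNr ?opprK ?mul1r.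
Qed.

Lemma par_pair n (y : 'I_(2 ^ n)) (i j : 'I_n) : par (xo y (xo (e i) (e j))) = par y.
Proof. by rewrite xoA !par_flip opprK. Qed.

Lemma sg_real b : sg b \is Num.real.
Proof. by case: b; rewrite /= ?rpredN rpred1. Qed.

Lemma G_so n (i j : 'I_n) : i != j -> in_so (G i j).
Proof.
move=> hij; split.
  move=> a b; rewrite !mxE; case: ifP => _; by rewrite ?sg_real ?rpred0.
rewrite /G trW oppW; apply: eqW => y.
have hji : (j == i) = false by rewrite eq_sym (negPf hij).
rewrite !bit_xo !bit_e eqxx hji. by case: (bit j y); rewrite /= ?opprK.
Qed.

Lemma G_comm n (i j : 'I_n) : G i j *m Zall n = Zall n *m G i j.
Proof.
rewrite Zall_W /G !mulW xo0 x0o. apply: eqW => y.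
by rewrite xo0 par_pair mulrC.
Qed.

Lemma tr_add N (A B : 'M[algC]_N) : (A + B)^T = A^T + B^T.
Proof. by apply/matrixP => i j; rewrite !mxE. Qed.
Lemma tr_sub N (A B : 'M[algC]_N) : (A - B)^T = A^T - B^T.
Proof. by apply/matrixP => i j; rewrite !mxE. Qed.
Lemma tr_scale N r (A : 'M[algC]_N) : (r *: A)^T = r *: A^T.
Proof. by apply/matrixP => i j; rewrite !mxE. Qed.

Lemma forward n (g : 'M[algC]_(2 ^ n)) : a2pi g -> in_so g /\ g *m Zall n = Zall n *m g.
Proof.
elim => {g}.
- move=> g [i [j [hij [->|->]]]].
    rewrite ts_XY //. by split; [apply: G_so | apply: G_comm].
  rewrite ts_YX //. have hji : j != i by rewrite eq_sym.
  by split; [apply: G_so | apply: G_comm].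
- split; last by rewrite mul0mx mulmx0.
  split; first by move=> a b; rewrite mxE rpred0.
  by rewrite trmx0 oppr0.
- move=> g h _ [[rg tg] cg] _ [[rh th] ch]. split; last by rewrite mulmxDl mulmxDr cg ch.
  split; first by move=> a b; rewrite mxE rpredD.
  by rewrite tr_add tg th opprD.
- move=> r g hr _ [[rg tg] cg]. split; last by rewrite -scalemxAl cg scalemxAr.
  split; first by move=> a b; rewrite mxE rpredM.
  by rewrite tr_scale tg scalerN.
- move=> g h _ [[rg tg] cg] _ [[rh th] ch]. split; last first.
    by rewrite mulmxBl mulmxBr -!mulmxA cg ch !mulmxA cg ch.
  split.
    move=> a b; rewrite !mxE rpredB //; apply: rpred_sum => k _; rewrite rpredM //.
  rewrite tr_sub !trmx_mul tg th !mulmxN !mulNmx !opprK opprB.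
  done.
Qed.

Lemma lie_opp n (g : 'M[algC]_(2 ^ n)) : a2pi g -> a2pi (- g).
Proof. move=> h; rewrite -scaleN1r; apply: lie_scale => //; by rewrite rpredN rpred1. Qed.

Lemma lie_sub n (g h : 'M[algC]_(2 ^ n)) : a2pi g -> a2pi h -> a2pi (g - h).
Proof. move=> hg hh; apply: lie_add => //; exact: lie_opp. Qed.

Lemma G_in n (i j : 'I_n) : i != j -> a2pi (G i j).
Proof. move=> hij; apply: lie_base; exists i, j; split => //; left; by rewrite ts_XY. Qed.

Lemma subW n (m : 'I_(2 ^ n)) f g : W m f - W m g = W m (fun y => f y - g y).
Proof. by rewrite oppW addW. Qed.

Definition ind (b : bool) : algC := if b then 1 else 0.

Definition loc {n : nat} (U : {set 'I_n}) (a y : 'I_(2 ^ n)) : algC :=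
  ind [forall k in U, bit k y == bit k a].

Definition PU {n : nat} (U : {set 'I_n}) : Prop :=
  forall i j : 'I_n, i != j -> i \notin U -> j \notin U -> forall a : 'I_(2 ^ n),
    a2pi (W (xo (e i) (e j)) (fun y => sg (bit j y) * loc U a y)).

Lemma PU0 n : PU (set0 : {set 'I_n}).
Proof.
move=> i j hij _ _ a. rewrite (_ : W _ _ = G i j); first exact: G_in.
apply: eqW => y; rewrite /loc.
have -> : [forall k in (set0 : {set 'I_n}), bit k y == bit k a] by apply/forall_inP => k; rewrite inE.
by rewrite mulr1.
Qed.

Lemma loc_split n (U : {set 'I_n}) k a y : k \in U ->
  loc U a y = loc (U :\ k) a y * ind (bit k y == bit k a).
Proof.
move=> hk; rewrite /loc.
case: (boolP [forall l in U :\ k, _]) => H.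
  rewrite mul1r. congr ind. apply/forall_inP/idP => [H2|H2 l hl].
    by apply: H2.
  case: (eqVneq l k) => [->|hlk] //. apply: (forall_inP H). by rewrite !inE hlk.
rewrite mul0r /ind. case: ifP => // H2. case/negP: H. apply/forall_inP => l.
rewrite !inE => /andP [_ hl]. exact: (forall_inP H2).
Qed.

Lemma loc_inv n (U : {set 'I_n}) a y p q : p \notin U -> q \notin U ->
  loc U a (xo y (xo (e p) (e q))) = loc U a y.
Proof.
move=> hp hq; rewrite /loc; congr ind; apply: eq_forallb_in => l hl.
rewrite !bit_xo !bit_e.
have -> : (l == p) = false by apply: negbTE; apply: contra hp => /eqP <-.
have -> : (l == q) = false by apply: negbTE; apply: contra hq => /eqP <-.
by rewrite /= Bool.xorb_false_r.
Qed.

Lemma mask1 n (a b c : 'I_(2 ^ n)) : xo (xo a b) (xo b c) = xo a c.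
Proof. apply: ord_bits => k. rewrite !bit_xo; by case: (bit k a); case: (bit k b); case: (bit k c). Qed.
Lemma mask2 n (a b c : 'I_(2 ^ n)) : xo (xo b c) (xo a b) = xo a c.
Proof. apply: ord_bits => k. rewrite !bit_xo; by case: (bit k a); case: (bit k b); case: (bit k c). Qed.

Lemma ind_sg b c : ind (b == c) = 2^-1 + 2^-1 * sg c * sg b.
Proof. case: b; case: c; rewrite /ind /sg /=; field; by []. Qed.

Lemma PU_step n (U : {set 'I_n}) k : k \in U -> PU (U :\ k) -> PU U.
Proof.
move=> hk IH i j hij hi hj a.
have hsub : U :\ k \subset U by apply: subsetDl.
have hi' : i \notin U :\ k by apply: contra hi; apply: (subsetP hsub).
have hj' : j \notin U :\ k by apply: contra hj; apply: (subsetP hsub).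
have hk' : k \notin U :\ k by rewrite !inE eqxx.
have hik : i != k by apply: contra hi => /eqP ->.
have hkj : k != j by apply: contraNneq hj => <-.
have H1 := IH i j hij hi' hj' a.
have H2 := IH i k hik hi' hk' a.
have H3 := G_in hkj.
have r1 : (2^-1 : algC) \is Num.real by rewrite rpredV rpred_nat.
have r2 : (- sg (bit k a) / 4 : algC) \is Num.real.
  by rewrite rpredM ?rpredN ?sg_real // rpredV rpred_nat.
have := lie_add (lie_scale r1 H1) (lie_scale r2 (lie_bracket H2 H3)).
rewrite /G !mulW mask1 mask2 subW !scaleW addW.
congr a2pi. apply: eqW => y.
rewrite (loc_split _ _ hk) ind_sg loc_inv //.
rewrite !bit_xo !bit_e eqxx (negPf hkj).
have -> : (j == i) = false by apply: negbTE; apply: contraNneq hij => ->.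
have -> : (j == k) = false by apply: negbTE; apply: contraNneq hkj => ->.
case: (bit k y); case: (bit j y); case: (bit k a); rewrite /sg /=; field; by [].
Qed.

Lemma PU_all n (U : {set 'I_n}) : PU U.
Proof.
move: {2}#|U| (erefl #|U|) => d; elim: d U => [|d IH] U hU.
  have : #|U| == 0%N by rewrite hU.
  rewrite cards_eq0 => /eqP ->; exact: PU0.
have : (0 < #|U|)%N by rewrite hU.
rewrite card_gt0 => /set0Pn [k hk].
apply: (PU_step hk). apply: IH.
move: hU; rewrite (cardsD1 k) hk /=. by case.
Qed.

Definition E {n : nat} (a b : 'I_(2 ^ n)) : 'M[algC]_(2 ^ n) := delta_mx a b - delta_mx b a.

Lemma EW n (a b : 'I_(2 ^ n)) : a != b ->
  E a b = W (xo a b) (fun y => ind (y == b) - ind (y == a)).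
Proof.
move=> hab; apply/matrixP => x y; rewrite !mxE.
case: (eqVneq y b) => [->|hyb].
  rewrite xoC xoK /ind andbT (eq_sym b a) (negPf hab) andbF subr0.
  by case: (x == a); rewrite /= ?mulr1n ?mulr0n ?subr0.
case: (eqVneq y a) => [->|hya].
  rewrite xoA xoss x0o /ind andbF.
  by case: (x == b); rewrite /= ?mulr1n ?mulr0n ?subrr.
rewrite /ind !andbF subrr. by case: ifP => _; rewrite ?subrr.
Qed.

Lemma base_E n (i j : 'I_n) (a : 'I_(2 ^ n)) : i != j ->
  a2pi (E a (xo a (xo (e i) (e j)))).
Proof.
move=> hij.
set U := [set l | (l != i) && (l != j)].
have hi : i \notin U by rewrite inE eqxx.
have hj : j \notin U by rewrite inE eqxx andbF.
have hji : j != i by rewrite eq_sym.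
have H1 := PU_all (U:=U) hij hi hj a.
have H2 := PU_all (U:=U) hji hj hi a.
rewrite xoC in H2.
have ri : (- sg (bit i a) / 2 : algC) \is Num.real.
  by rewrite rpredM ?rpredN ?sg_real // rpredV rpred_nat.
have rj : (- sg (bit j a) / 2 : algC) \is Num.real.
  by rewrite rpredM ?rpredN ?sg_real // rpredV rpred_nat.
have := lie_add (lie_scale ri H2) (lie_scale rj H1).
rewrite !scaleW addW.
have hne : a != xo a (xo (e i) (e j)).
  apply/eqP => H; move: (congr1 (fun z : 'I_(2 ^ n) => bit i z) H).
  cbv beta; rewrite !bit_xo !bit_e eqxx (negPf hij).
  by case: (bit i a).
rewrite (EW hne) xoA xoss x0o.
congr a2pi; apply: eqW => y.
have Ea : (y == a) = [&& bit i y == bit i a, bit j y == bit j a &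
                        [forall k in U, bit k y == bit k a]].
  rewrite eq_bits. apply/forallP/and3P => [H|[Hi Hj /forall_inP HU] k].
    split; [exact: H | exact: H | by apply/forall_inP => k _; apply: H].
  case: (eqVneq k i) => [->//|hki]. case: (eqVneq k j) => [->//|hkj].
  by apply: HU; rewrite inE hki hkj.
have Eb : (y == xo a (xo (e i) (e j))) = [&& bit i y != bit i a, bit j y != bit j a &
                        [forall k in U, bit k y == bit k a]].
  rewrite eq_bits. apply/forallP/and3P => [H|[Hi Hj /forall_inP HU] k].
    split.
    - move/eqP: (H i); rewrite !bit_xo !bit_e eqxx (negPf hij) => ->.
      by case: (bit i a).
    - move/eqP: (H j); rewrite !bit_xo !bit_e eqxx (negPf hji) => ->.
      by case: (bit j a).
    - apply/forall_inP => k; rewrite inE => /andP [hki hkj].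
      by move/eqP: (H k); rewrite !bit_xo !bit_e (negPf hki) (negPf hkj) => ->; case: (bit k a).
  rewrite !bit_xo !bit_e.
  case: (eqVneq k i) => [->|hki].
    rewrite ?eqxx ?(negPf hij) /=. by move: Hi; case: (bit i y); case: (bit i a).
  case: (eqVneq k j) => [->|hkj].
    rewrite ?eqxx ?(negPf hji) /=. by move: Hj; case: (bit j y); case: (bit j a).
  rewrite ?(negPf hki) ?(negPf hkj) /= Bool.xorb_false_r. apply: HU; by rewrite inE hki hkj.
rewrite Ea Eb /loc.
case: [forall k in U, _]; rewrite /= ?andbF /ind;
  case: (bit i y); case: (bit i a); case: (bit j y); case: (bit j a);
  rewrite /sg /=; field; by [].
Qed.

Lemma par_pm n (y : 'I_(2 ^ n)) : par y = 1 \/ par y = -1.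
Proof.
rewrite /par; apply: (big_ind (fun v : algC => v = 1 \/ v = -1)); first by left.
  move=> u v [->|->] [->|->]; rewrite ?mul1r ?mulN1r ?opprK; by [left|right|right|left].
move=> k _; case: (bit k y); by [right|left].
Qed.

Lemma par_flip_neq n (y : 'I_(2 ^ n)) l : par (xo y (e l)) != par y.
Proof.
rewrite par_flip. case: (par_pm y) => ->; rewrite ?opprK.
  by rewrite -subr_eq0 -opprD oppr_eq0 (_ : 1 + 1 = 2%:R) // pnatr_eq0.
by rewrite -subr_eq0 opprK (_ : 1 + 1 = 2%:R) // pnatr_eq0.
Qed.

Lemma bracketE n (x c y : 'I_(2 ^ n)) : x != c -> c != y -> x != y ->
  E x c *m E c y - E c y *m E x c = E x y.
Proof.
move=> hxc hcy hxy; rewrite /E !mulmxBl !mulmxBr !mul_delta_mx_cond.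
rewrite eqxx (negPf hcy) (negPf hxc) (negPf hxy) eq_sym (negPf hxy) eq_sym (negPf hcy) eq_sym (negPf hxc).
rewrite !mulr0n !mulr1n !subr0 !sub0r !opprK. done.
Qed.

Lemma path_E n (x y : 'I_(2 ^ n)) : par x = par y -> a2pi (E x y).
Proof.
suff H : forall d (x y : 'I_(2 ^ n)), (#|[set k : 'I_n | bit k x != bit k y]| <= d)%N ->
  par x = par y -> a2pi (E x y) by apply: H.
elim=> [|d IH] {}x {}y hd hp.
  case: (eqVneq x y) => [->|hxy]; first by rewrite /E subrr; exact: lie_zero.
  move: hxy; rewrite eq_bits negb_forall => /existsP [k hk].
  have : (0 < #|[set k : 'I_n | bit k x != bit k y]|)%N.
    by rewrite card_gt0; apply/set0Pn; exists k; rewrite inE.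
  by rewrite leqNgt in hd; rewrite (negPf hd).
case: (eqVneq x y) => [->|hxy]; first by rewrite /E subrr; exact: lie_zero.
move: (hxy); rewrite eq_bits negb_forall => /existsP [k hk].
have hx'y : xo x (e k) != y.
  apply/eqP => h. have := par_flip_neq x k. by rewrite h hp eqxx.
move: hx'y; rewrite eq_bits negb_forall => /existsP [l hl].
have hlk : l != k.
  apply: contraNneq hl => ->. rewrite bit_flip eqxx.
  by move: hk; case: (bit k x); case: (bit k y).
have hl' : bit l x != bit l y by move: hl; rewrite bit_flip (negPf hlk) Bool.xorb_false_r.
have hkl : k != l by rewrite eq_sym.
set c := xo x (xo (e k) (e l)).
have hxc : x != c.
  apply/eqP => H; move: (congr1 (fun z : 'I_(2 ^ n) => bit k z) H).
  cbv beta; rewrite !bit_xo !bit_e eqxx (negPf hkl).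
  by case: (bit k x).
have Hb : a2pi (E x c) by apply: base_E.
case: (eqVneq c y) => [<-//|hcy].
have bc : forall m : 'I_n, bit m c = xorb (bit m x) (xorb (m == k) (m == l)).
  by move=> m; rewrite /c !bit_xo !bit_e.
have hcard : (#|[set m : 'I_n | bit m c != bit m y]| <= d)%N.
  have hsub : [set m : 'I_n | bit m c != bit m y] \subset
              [set m : 'I_n | bit m x != bit m y] :\ k.
    apply/subsetP => m; rewrite !inE bc.
    case: (eqVneq m k) => [->|hmk].
      rewrite ?eqxx ?(negPf hkl) /=. by move: hk; case: (bit k x); case: (bit k y).
    case: (eqVneq m l) => [->|hml].
      rewrite ?eqxx /=. by move: hl'; case: (bit l x); case: (bit l y).
    by rewrite /= Bool.xorb_false_r.
  apply: (leq_trans (subset_leq_card hsub)).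
  move: hd; rewrite (cardsD1 k) inE hk /=. by rewrite add1n ltnS.
have hpc : par c = par y by rewrite /c par_pair.
have IHc := IH c y hcard hpc.
rewrite -(bracketE hxc hcy hxy). exact: lie_bracket.
Qed.

Lemma mul_diagW n (A : 'M[algC]_(2 ^ n)) d x y : (A *m W z0 d) x y = A x y * d y.
Proof.
rewrite !mxE (bigD1 y) //= big1 ?addr0; first by rewrite mxE xo0 eqxx.
move=> z hz; by rewrite mxE xo0 (negPf hz) mulr0.
Qed.

Lemma mul_Wdiag n (A : 'M[algC]_(2 ^ n)) d x y : (W z0 d *m A) x y = d x * A x y.
Proof.
rewrite !mxE (bigD1 x) //= big1 ?addr0; first by rewrite mxE xo0 eqxx.
move=> z hz; by rewrite mxE xo0 eq_sym (negPf hz) mul0r.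
Qed.

Lemma backward n (g : 'M[algC]_(2 ^ n)) :
  in_so g -> g *m Zall n = Zall n *m g -> a2pi g.
Proof.
move=> [hr ht] hc.
have gs : forall x y, g y x = - g x y.
  move=> x y; have := congr1 (fun M : 'M[algC]_(2 ^ n) => M x y) ht. by rewrite !mxE.
have gz : forall x y, par x != par y -> g x y = 0.
  move=> x y hxy. rewrite Zall_W in hc.
  have := congr1 (fun M : 'M[algC]_(2 ^ n) => M x y) hc.
  rewrite mul_diagW mul_Wdiag mulrC => /eqP. rewrite -subr_eq0 -mulrBl mulf_eq0.
  case/orP => [|/eqP //]. rewrite subr_eq0 => /eqP h. by rewrite h eqxx in hxy.
set C := \matrix_(x, y) (g x y / 2).
have e1 : \sum_x \sum_y C x y *: delta_mx x y = C by rewrite -matrix_sum_delta.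
have e2 : \sum_x \sum_y C x y *: delta_mx y x = C^T.
  rewrite exchange_big /= [RHS]matrix_sum_delta. apply: eq_bigr => y _.
  apply: eq_bigr => x _. by rewrite !mxE.
have e3 : \sum_x \sum_y C x y *: E x y = g.
  rewrite /E.
  rewrite (eq_bigr (fun x => \sum_y C x y *: delta_mx x y - \sum_y C x y *: delta_mx y x)); last first.
    move=> x _; rewrite -sumrB. apply: eq_bigr => y _. by rewrite scalerBr.
  rewrite sumrB e1 e2. apply/matrixP => x y. rewrite !mxE gs. field. done.
rewrite -e3. apply: big_ind; [exact: lie_zero | exact: lie_add | move=> x _].
apply: big_ind; [exact: lie_zero | exact: lie_add | move=> y _].
case: (eqVneq (par x) (par y)) => hp.
  apply: lie_scale; last exact: path_E.
  by rewrite mxE rpredM ?hr // rpredV rpred_nat.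
rewrite mxE gz // mul0r scale0r. exact: lie_zero.
Qed.

Unset Implicit Arguments.

Theorem mainTheorem19 (n : nat) (hn : (2 <= n)%N) (g : 'M[algC]_(2 ^ n)) :
  a2pi g <-> (in_so g /\ g *m Zall n = Zall n *m g).
Proof.
split; first exact: forward.
by case=> h1 h2; apply: backward.
Qed.
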